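(* Let $S$ be a semigroup. If $S$ is not finite, then the category $\mathbf{OI}_{++}/N(S)$ is not quasi-Gröbner.
   Context: Quasi-Gröbner categories. Let $\mathcal{C}$ be a small category and $c$ an object. An admissible order on the morphisms out of $c$ is a choice, for every object $c'$, of a well-order on $\mathrm{Hom}(c,c')$ such that $f\prec f'$ implies $g\circ f\prec g\circ f'$ for all $g$. On morphisms out of $c$ put the preorder $f\le g$ iff $g=h\circ f$ for some $h$; $|c/\mathcal{C}|$ is the associated poset. A poset is Noetherian if every sequence $x_1,x_2,\dots$ has $i<j$ with $x_i\le x_j$. $\mathcal{C}$ is Gröbner if for every object $c$: (G1) morphisms out of $c$ admit an admissible order, and (G2) $|c/\mathcal{C}|$ is Noetherian. A functor $\Phi:\mathcal{C}\to\mathcal{D}$ has property (F) if for every object $d$ of $\mathcal{D}$ there are finitely many objects $c_i$ of $\mathcal{C}$ and morphisms $f_i:d\to\Phi(c_i)$ such that every $f:d\to\Phi(c)$ factors as $\Phi(g)\circ f_i$ for some $i$ and $g:c_i\to c$. $\mathcal{D}$ is quasi-Gröbner if there is a Gröbner $\mathcal{C}$ and an essentially surjective functor $\mathcal{C}\to\mathcal{D}$ with property (F). $\mathbf{OI}_{++}$ is the category of finite ordinals $[n]=\{0<1<\dots<n\}$ with $n\ge1$ and order-preserving injections. $N(S)$ is the presheaf on $\mathbf{OI}_{++}$ with $N(S)([n])=S^n$, with the nerve structure maps: for an injection $\varphi:[n]\to[m]$ and $(t_1,\dots,t_m)\in S^m$, $N(S)(\varphi)(t_1,\dots,t_m)=(s_1,\dots,s_n)$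 with $s_i=t_{\varphi(i-1)+1}t_{\varphi(i-1)+2}\cdots t_{\varphi(i)}$. $\mathbf{OI}_{++}/N(S)$ is its category of elements: objects are non-empty finite sequences $(s_1,\dots,s_n)$ of elements of $S$, and a morphism $(s_1,\dots,s_n)\to(t_1,\dots,t_m)$ is an injection $\varphi:[n]\to[m]$ in $\mathbf{OI}_{++}$ with $N(S)(\varphi)(t_1,\dots,t_m)=(s_1,\dots,s_n)$. *)

(* Defs.v *)
From Stdlib Require List.
From mathcomp Require Import all_boot zify.
Set Implicit Arguments. Unset Strict Implicit. Unset Printing Implicit Defensive.

Record CatData := {
  Obj :> Type;
  Hom : Obj -> Obj -> Type;
  idm : forall a, Hom a a;
  comp : forall a b c, Hom b c -> Hom a b -> Hom a c }.
Arguments Hom {C} a b : rename.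
Arguments idm {C} a : rename.
Arguments comp {C a b c} g f : rename.

Definition is_category (C : CatData) : Prop :=
  [/\ (forall (a b : C) (f : Hom a b), comp (idm b) f = f),
      (forall (a b : C) (f : Hom a b), comp f (idm a) = f) &
      (forall (a b c d : C) (f : Hom a b) (g : Hom b c) (h : Hom c d),
          comp h (comp g f) = comp (comp h g) f)].

Record Functor (C D : CatData) := {
  fobj :> C -> D;
  fhom : forall a b : C, Hom a b -> Hom (fobj a) (fobj b) }.
Arguments fhom {C D} F {a b} f : rename.

Definition is_functor (C D : CatData) (F : Functor C D) : Prop :=
  (forall a : C, fhom F (idm a) = idm (F a)) /\
  (forall (a b c : C) (f : Hom a b) (g : Hom b c),
      fhom F (comp g f) = comp (fhom F g) (fhom F f)).

Definition isomorphic (D : CatData) (a b : D) : Prop :=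
  exists (u : Hom a b) (v : Hom b a), comp u v = idm b /\ comp v u = idm a.

Definition essentially_surjective (C D : CatData) (F : Functor C D) : Prop :=
  forall d : D, exists c : C, isomorphic (F c) d.

Definition property_F (C D : CatData) (F : Functor C D) : Prop :=
  forall d : D, exists (k : nat) (cs : 'I_k -> C) (fs : forall i, Hom d (F (cs i))),
    forall (c : C) (f : Hom d (F c)),
      exists (i : 'I_k) (g : Hom (cs i) c), f = comp (fhom F g) (fs i).

Definition well_order (A : Type) (R : A -> A -> Prop) : Prop :=
  [/\ (forall x y z, R x y -> R y z -> R x z),
      (forall x y, R x y \/ x = y \/ R y x) & well_founded R].

Definition admissible_order (C : CatData) (c : C)
    (R : forall c' : C, Hom c c' -> Hom c c' -> Prop) : Prop :=
  (forall c' : C, well_order (R c')) /\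
  (forall (c' c'' : C) (g : Hom c' c'') (f f' : Hom c c'),
      R c' f f' -> R c'' (comp g f) (comp g f')).

(* morphisms out of c, and the preorder f <= g iff g = h o f;
   |c/C| is the associated poset *)
Definition out_of (C : CatData) (c : C) := {a : C & Hom c a}.

Definition under_le (C : CatData) (c : C) (x y : out_of c) : Prop :=
  exists h : Hom (projT1 x) (projT1 y), projT2 y = comp h (projT2 x).

Definition noetherian (A : Type) (le : A -> A -> Prop) : Prop :=
  forall x : nat -> A, exists i j : nat, (i < j)%N /\ le (x i) (x j).

Definition groebner (C : CatData) : Prop :=
  forall c : C, (exists R, @admissible_order C c R) /\ noetherian (@under_le C c).

Definition quasi_groebner (D : CatData) : Prop :=
  exists (C : CatData) (F : Functor C D),
    [/\ is_category C, groebner C, is_functor F,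
        essentially_surjective F & property_F F].

Definition finite_type (A : Type) : Prop :=
  exists l : seq A, forall x : A, List.In x l.

Section OIN.
Variables (S : Type) (op : S -> S -> S) (opA : associative op).

(* adjoin a unit None to the semigroup *)
Definition oplus (x y : option S) : option S :=
  match x, y with
  | None, _ => y
  | _, None => x
  | Some a, Some b => Some (op a b)
  end.

Lemma oplusA : associative oplus.
Proof. by case=> [a|] [b|] [c|] //=; rewrite opA. Qed.

Lemma oplus0l : left_id None oplus. Proof. by case. Qed.
Lemma oplus0r : right_id None oplus. Proof. by case. Qed.

Definition sprod (l : seq (option S)) := foldr oplus None l.

Lemma sprod_cat l1 l2 : sprod (l1 ++ l2) = oplus (sprod l1) (sprod l2).
Proof. by elim: l1 => [|x l IH] /=; rewrite ?oplus0l // IH oplusA. Qed.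

(* product T_{a+1} ... T_b (1-based), i.e. of entries with 0-based index in [a, b) *)
Definition seg (T : seq (option S)) (a b : nat) : option S :=
  sprod [seq nth None T i | i <- iota a (b - a)].

Lemma seg_cat T a b c : a <= b -> b <= c ->
  seg T a c = oplus (seg T a b) (seg T b c).
Proof.
move=> ab bc; rewrite /seg.
have -> : c - a = (b - a) + (c - b) by lia.
by rewrite iotaD subnKC // map_cat sprod_cat.
Qed.

Lemma seg0 T a : seg T a a = None.
Proof. by rewrite /seg subnn. Qed.

Lemma seg1 T a : seg T a a.+1 = nth None T a.
Proof. by rewrite /seg subSnn /= oplus0r. Qed.

(* N(S)(phi), for phi given by its increasing list of values p = [phi 0; ...; phi n] *)
Definition nerve (p : seq nat) (T : seq (option S)) : seq (option S) :=
  mkseq (fun i => seg T (nth 0 p i) (nth 0 p i.+1)) (size p).-1.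

(* order-preserving injection [size s] -> [size t] *)
Definition oi_valid (p : seq nat) (n m : nat) : bool :=
  [&& size p == n.+1, sorted ltn p & all (fun i => i <= m) p].

Record oin_hom (s t : seq S) := OinHom {
  oin_map : seq nat;
  oin_valid : oi_valid oin_map (size s) (size t);
  oin_nerve : nerve oin_map (map Some t) = map Some s }.

Definition oin_obj := {s : seq S | 0 < size s}.

Lemma oin_id_valid (s : seq S) : oi_valid (iota 0 (size s).+1) (size s) (size s).
Proof.
rewrite /oi_valid size_iota eqxx iota_ltn_sorted /=.
apply/allP=> i; rewrite mem_iota /=; lia.
Qed.

Lemma nerve_iota (T : seq (option S)) :
  nerve (iota 0 (size T).+1) T = T.
Proof.
apply: (@eq_from_nth _ None); first by rewrite size_mkseq size_iota.
move=> i; rewrite size_mkseq size_iota => hi; have {}hi : i < size T by [].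
have h1 : i < (size T).+1 by apply: ltnW. rewrite nth_mkseq ?size_iota // (nth_iota 0 0 h1) (nth_iota 0 0 (hi : i.+1 < (size T).+1)) add0n add0n seg1 //.
Qed.

Definition oin_id (s : seq S) : oin_hom s s.
Proof.
refine (@OinHom s s (iota 0 (size s).+1) (oin_id_valid s) _).
by rewrite -(size_map Some s) nerve_iota.
Defined.

Lemma seg_nerve (q : seq nat) (U : seq (option S)) a b :
  sorted ltn q -> a <= b -> b < size q ->
  seg U (nth 0 q a) (nth 0 q b) = seg (nerve q U) a b.
Proof.
move=> sq ab; elim: b ab => [|b IH]; first by rewrite leqn0 => /eqP ->; rewrite !seg0.
rewrite leq_eqVlt => /orP [/eqP -> _|]; first by rewrite !seg0.
rewrite ltnS => ab bq.
have mono : forall i j, i <= j -> j < size q -> nth 0 q i <= nth 0 q j.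
  move=> i j ij jq.
  have sq' : sorted leq q by apply: sub_sorted sq => x y /ltnW.
  exact: (sorted_leq_nth leq_trans leqnn 0 sq' i j (leq_ltn_trans ij jq) jq ij).
rewrite (seg_cat U (mono _ _ ab (ltnW bq)) (mono _ _ (leqnSn b) bq)).
rewrite (seg_cat (nerve q U) ab (leqnSn b)) IH ?(ltnW bq) // seg1.
rewrite nth_mkseq //; rewrite -ltnS (ltn_predK bq) //.
Qed.

Lemma oin_comp_valid (s t u : seq S) (p q : seq nat) :
  oi_valid p (size s) (size t) -> oi_valid q (size t) (size u) ->
  oi_valid (map (nth 0 q) p) (size s) (size u).
Proof.
case/and3P=> /eqP sp sortp allp; case/and3P=> /eqP sq sortq allq.
rewrite /oi_valid size_map sp eqxx /=; apply/andP; split.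
  apply: (@homo_sorted_in _ _ [pred i | i <= size t] _ ltn ltn p _ allp sortp).
  move=> i j hi hj ij.
  have hi' : i < size q by rewrite sq ltnS.
  have hj' : j < size q by rewrite sq ltnS.
  exact: (sorted_ltn_nth ltn_trans 0 sortq i j hi' hj' ij).
apply/allP=> x /mapP [i ip ->]; apply: (allP allq); apply: mem_nth.
by rewrite sq ltnS (allP allp).
Qed.

Lemma oin_comp_nerve (s t u : seq S) (p q : seq nat) :
  oi_valid p (size s) (size t) -> oi_valid q (size t) (size u) ->
  nerve p (map Some t) = map Some s -> nerve q (map Some u) = map Some t ->
  nerve (map (nth 0 q) p) (map Some u) = map Some s.
Proof.
case/and3P=> /eqP sp sortp allp; case/and3P=> /eqP sq sortq allq hp hq.
rewrite -hp -hq.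
apply: (@eq_from_nth _ None); first by rewrite !size_mkseq size_map.
move=> j; rewrite size_mkseq size_map => hj.
have hj1 : j.+1 < size p by lia.
rewrite !nth_mkseq ?size_map // !(nth_map 0) ?(ltnW hj1) //.
apply: seg_nerve => //.
  have sp' : sorted leq p by apply: sub_sorted sortp => x y /ltnW.
  exact: (sorted_leq_nth leq_trans leqnn 0 sp' j j.+1 (ltnW hj1) hj1 (leqnSn j)).
by rewrite sq ltnS (allP allp) // mem_nth.
Qed.

Definition oin_comp (s t u : seq S) (q : oin_hom t u) (p : oin_hom s t) : oin_hom s u :=
  @OinHom s u (map (nth 0 (oin_map q)) (oin_map p))
    (oin_comp_valid (oin_valid p) (oin_valid q))
    (oin_comp_nerve (oin_valid p) (oin_valid q) (oin_nerve p) (oin_nerve q)).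

(* the category of elements OI_{++} / N(S) *)
Definition OI_N : CatData :=
  {| Obj := oin_obj;
     Hom := fun x y => oin_hom (val x) (val y);
     idm := fun x => oin_id (val x);
     comp := fun x y z g f => oin_comp g f |}.

End OIN.

(* Main.v *)
Require Import Defs.
From mathcomp Require Import all_boot.
From mathcomp Require Import zify.
From Stdlib Require Import ClassicalEpsilon.

Lemma pigeon (k : nat) (l : nat -> 'I_k) :
  exists i (s : nat -> nat), (forall n, s n < s n.+1) /\ forall n, l (s n) = i.
Proof.
have [[i Hi]|N] := classic (exists i, forall N, exists n, N <= n /\ l n = i).
  pose nx N := proj1_sig (constructive_indefinite_description _ (Hi N)).
  have nxP N : N <= nx N /\ l (nx N) = i.
    exact: (proj2_sig (constructive_indefinite_description _ (Hi N))).
  pose s := fix s n := if n is n'.+1 then nx (s n').+1 else nx 0.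
  exists i, s; split => [n|[|n]] /=; first by case: (nxP (s n).+1).
    by case: (nxP 0).
  by case: (nxP (s n).+1).
have H : forall i, exists N, forall n, N <= n -> l n <> i.
  move=> i; apply: NNPP => Hn; apply: N; exists i => M.
  apply: NNPP => HM; apply: Hn; exists M => n Mn lni; apply: HM; by exists n.
pose Nf i := proj1_sig (constructive_indefinite_description _ (H i)).
have NfP i : forall n, Nf i <= n -> l n <> i.
  exact: (proj2_sig (constructive_indefinite_description _ (H i))).
pose M := \max_(i < k) Nf i.
exfalso; apply: (NfP (l M) M) => //.
by apply: (@leq_bigmax_cond _ (fun _ => true) Nf (l M)).
Qed.

Lemma incr_mono (s : nat -> nat) : (forall n, s n < s n.+1) ->
  forall a b, a < b -> s a < s b.
Proof.
move=> Hs a b; elim: b => [|b IH] //; rewrite ltnS leq_eqVlt => /orP [/eqP ->|/IH h].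
  exact: Hs.
exact: ltn_trans h (Hs b).
Qed.

Lemma qg_seq (D : CatData) : quasi_groebner D ->
  forall (d : D) (e : nat -> D) (h : forall n, Hom d (e n)),
  exists j k, j < k /\ inhabited (Hom (e j) (e k)).
Proof.
move=> [C [F [_ gC _ esF pF]]] d e h.
have [k [cs [fs Hf]]] := pF d.
have H1 : forall n, exists p : {c : C & (Hom (F c) (e n) * Hom (e n) (F c))%type}, True.
  move=> n; have [c [u [v _]]] := esF (e n); by exists (existT _ c (u, v)).
pose p n := proj1_sig (constructive_indefinite_description _ (H1 n)).
pose c n := projT1 (p n).
have H2 : forall n, exists q : {i : 'I_k & Hom (cs i) (c n)}, True.
  move=> n; have [i [g _]] := Hf (c n) (Defs.comp (projT2 (p n)).2 (h n)).
  by exists (existT _ i g).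
pose q n := proj1_sig (constructive_indefinite_description _ (H2 n)).
have [i [s [Hs E]]] := @pigeon k (fun n => projT1 (q n)).
pose x m : out_of (cs i) := existT _ (c (s m))
   (eq_rect _ (fun j => Hom (cs j) (c (s m))) (projT2 (q (s m))) i (E m)).
have [_ N] := gC (cs i).
have [a [b [ab [hh _]]]] := N x.
exists (s a), (s b); split; first exact: incr_mono.
constructor.
exact: (Defs.comp (projT2 (p (s b))).1 (Defs.comp (fhom F hh) (projT2 (p (s a))).2)).
Qed.

Lemma inj_seq (S : Type) : ~ finite_type S ->
  exists t : nat -> S, forall j k, j < k -> t j <> t k.
Proof.
move=> nf.
have H : forall l : seq S, exists x, ~ List.In x l.
  move=> l; apply: NNPP => Hn; apply: nf; exists l => x.
  by apply: NNPP => Hx; apply: Hn; exists x.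
pose f l := proj1_sig (constructive_indefinite_description _ (H l)).
have fP l : ~ List.In (f l) l.
  exact: (proj2_sig (constructive_indefinite_description _ (H l))).
pose L := fix L n := if n is n'.+1 then f (L n') :: L n' else [::].
exists (fun n => f (L n)) => j k jk E.
apply: (fP (L k)); rewrite -E.
elim: k jk {E} => [|k IH] //; rewrite ltnS leq_eqVlt => /orP [/eqP ->|/IH h].
  by left.
by right.
Qed.

Section Main.
Variables (S : Type) (op : S -> S -> S) (opA : associative op).

Lemma hom2 (a b c : S) : oin_hom op [:: a; b] [:: a; c] -> b = c.
Proof.
case=> pp V Nv.
case/and3P: V; case: pp Nv => [|x [|y [|z [|w r]]]] //= Nv _.
move=> H1 H2; move: H1 H2; rewrite /=; move=> H1 H2.
have ex : x = 0 by lia. have ey : y = 1 by lia. have ez : z = 2 by lia.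
subst. by case: Nv.
Qed.

Theorem main_thm : ~ finite_type S -> ~ quasi_groebner (OI_N opA).
Proof.
move=> nf qg.
have [t Ht] := @inj_seq S nf.
pose d : OI_N opA := exist _ [:: t 0] (erefl true).
pose e n : OI_N opA := exist _ [:: t 0; t n] (erefl true).
have h : forall n, Hom d (e n).
  move=> n; by refine (@OinHom _ op [:: t 0] [:: t 0; t n] [:: 0; 1] (erefl true) _).
have [j [k [jk [m]]]] := @qg_seq _ qg _ _ h.
apply: (Ht j k jk). move: m => /= m. exact: (@hom2 _ _ _ m).
Qed.
End Main.

Theorem proposition5p11 (S : Type) (op : S -> S -> S) (opA : associative op) :
  ~ finite_type S -> ~ quasi_groebner (OI_N opA).
Proof. exact: main_thm. Qed.
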